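(* Let $N\ge1$, $K\ge2$ be integers with $N$ divisible by $K$, put $m=N/K$, and let $\alpha\in[0,1]$. Let $\sigma^A,\sigma^B$ be mixed strategies of $\mathcal{B}_\alpha(N,K)$ such that, for every battlefield $k$, the marginal $\sigma^A_k$ is the uniform distribution on the odd integers $\{1,3,\ldots,2m-1\}$ and the marginal $\sigma^B_k$ is the uniform distribution on the even integers $\{0,2,\ldots,2m\}$. Then $(\sigma^A,\sigma^B)$ is a Nash equilibrium of $\mathcal{B}_\alpha(N,K)$, and each player's expected payoff equals $K/2$.
   Context: Fix integers $N\ge1$, $K\ge2$ and a real number $\alpha$. The Colonel Blotto game $\mathcal{B}_\alpha(N,K)$ is the two-player simultaneous-move game with players $A,B$, each with pure strategy set $S=\{s\in\{0,1,\ldots,N\}^K:\sum_{k=1}^K s_k=N\}$, in which the payoff of player $i$ at the pure profile $(s^i,s^{-i})$ is $\pi^i(s^i,s^{-i})=\sum_{k=1}^K\big(\mathbf 1[s^i_k>s^{-i}_k]+\tfrac{\alpha}{2}\mathbf 1[s^i_k=s^{-i}_k]\big)$. Mixed strategies are probability distributions on $S$, with expected payoffs under independent randomization; a Nash equilibrium is a mixed profile from which no unilateral deviation raises a player's expected payoff. For a mixed strategy $\sigma$ and battlefield $k$, the marginal $\sigma_k$ is the distribution of $s_k$ when $s\sim\sigma$. *)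

(* Defs.v *)
From HB Require Import structures.
From mathcomp Require Import all_boot all_order all_algebra.
From mathcomp Require Import reals.
Set Implicit Arguments. Unset Strict Implicit. Unset Printing Implicit Defensive.
Import Order.TTheory GRing.Theory Num.Theory.
Local Open Scope ring_scope.

Definition alloc (N K : nat) := {ffun 'I_K -> 'I_N.+1}.

Definition is_pure (N K : nat) (s : alloc N K) : bool :=
  (\sum_(k < K) (s k : nat))%N == N.

Definition payoff (R : realType) (N K : nat) (alpha : R) (s t : alloc N K) : R :=
  \sum_(k < K) (((t k : nat) < s k)%N%:R + alpha / 2 * ((s k : nat) == t k)%:R).

Definition mixed (R : realType) (N K : nat) (sigma : {ffun alloc N K -> R}) : Prop :=
  [/\ forall s, 0 <= sigma s,
      \sum_s sigma s = 1
    & forall s, ~~ is_pure s -> sigma s = 0].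

Definition exp_payoff (R : realType) (N K : nat) (alpha : R)
  (sigma tau : {ffun alloc N K -> R}) : R :=
  \sum_s \sum_t sigma s * tau t * payoff alpha s t.

Definition nash (R : realType) (N K : nat) (alpha : R)
  (sA sB : {ffun alloc N K -> R}) : Prop :=
  [/\ mixed sA, mixed sB,
      forall tau, mixed tau -> exp_payoff alpha tau sB <= exp_payoff alpha sA sB
    & forall tau, mixed tau -> exp_payoff alpha tau sA <= exp_payoff alpha sB sA].

Definition marginal (R : realType) (N K : nat) (sigma : {ffun alloc N K -> R})
  (k : 'I_K) (j : 'I_N.+1) : R :=
  \sum_(s : alloc N K | s k == j) sigma s.

(* Main.v *)
Require Import Defs.
From HB Require Import structures.
From mathcomp Require Import all_boot all_order all_algebra.
From mathcomp Require Import reals.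
From mathcomp Require Import ring lra zify.
Import Order.TTheory GRing.Theory Num.Theory.
Lemma sum_lt n y : \sum_(0 <= i < n) (i < y) = minn n y.
Proof.
elim: n => [|n IH]; first by by rewrite big_geq // min0n.
rewrite big_nat_recr //= IH; case: ltnP => h /=; lia.
Qed.
Lemma sumS K (f : 'I_K -> nat) : \sum_(k<K) (f k).+1 = \sum_(k<K) f k + K.
Proof. under eq_bigr do rewrite -addn1. by rewrite big_split /= sum1_card card_ord. Qed.
Set Implicit Arguments. Unset Strict Implicit. Unset Printing Implicit Defensive.
Local Open Scope ring_scope.

Lemma marg_sum (R : realType) N K (sg : {ffun alloc N K -> R})
  (g : 'I_K -> 'I_N.+1 -> R) :
  \sum_s sg s * \sum_(k < K) g k (s k) =
  \sum_(k < K) \sum_j marginal sg k j * g k j.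
Proof.
under eq_bigr do rewrite mulr_sumr.
rewrite exchange_big /=; apply: eq_bigr => k _.
rewrite (partition_big (fun s : alloc N K => s k) xpredT) //=.
apply: eq_bigr => j _; rewrite /marginal mulr_suml.
by apply: eq_bigr => s /eqP <-.
Qed.

Lemma exp_le (R : realType) N K (alpha : R) (ta sg : {ffun alloc N K -> R}) (c : R) :
  mixed ta -> (forall s, is_pure s -> \sum_t sg t * payoff alpha s t <= c) ->
  exp_payoff alpha ta sg <= c.
Proof.
case=> t0 t1 t2 H; rewrite /exp_payoff.
have -> : \sum_s \sum_t ta s * sg t * payoff alpha s t =
          \sum_s ta s * \sum_t sg t * payoff alpha s t.
  apply: eq_bigr => s _; rewrite mulr_sumr; apply: eq_bigr => t _.
  by rewrite mulrA.
apply: (@le_trans _ _ (\sum_s ta s * c)).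
  apply: ler_sum => s _; case: (boolP (is_pure s)) => hs.
    by apply: ler_wpM2l; [exact: t0| exact: H].
  by rewrite t2 // !mul0r.
by rewrite -mulr_suml t1 mul1r.
Qed.

Lemma pure_vs (R : realType) N K (alpha : R) (sg : {ffun alloc N K -> R}) s :
  \sum_t sg t * payoff alpha s t =
  \sum_(k < K) \sum_j marginal sg k j *
     ((((j : nat) < s k)%N)%:R + alpha / 2 * (((s k : nat) == j))%:R).
Proof.
rewrite /payoff.
exact: (marg_sum sg (fun k (j : 'I_N.+1) =>
     ((((j : nat) < s k)%N)%:R + alpha / 2 * (((s k : nat) == j))%:R))).
Qed.



Lemma widen2 (R : realType) (F : nat -> R) n : (forall j, 0 <= F j) ->
  \sum_(0 <= j < n) F j <= \sum_(0 <= j < n.*2) F j.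
Proof.
move=> h; rewrite (@big_cat_nat _ _ _ n 0 n.*2) //; last by rewrite -addnn leq_addr.
by rewrite lerDl; apply: sumr_ge0.
Qed.

Lemma pairB (R : realType) (x n : nat) :
  \sum_(0 <= j < n.*2) (if ~~ odd j then ((j < x)%N%:R + 1/2 * (x == j)%:R) else 0)
  <= 1/2 * \sum_(0 <= i < n.*2) ((i < x.+1)%N)%:R :> R.
Proof.
elim: n => [|n IH]; first by rewrite !big_geq // mulr0.
rewrite doubleS !big_nat_recr //= odd_double /=.
set d := n.*2 in IH *.
have key : ((d < x)%N%:R + 1/2 * (x == d)%:R : R) <=
   1/2 * ((d < x.+1)%N)%:R + 1/2 * ((d.+1 < x.+1)%N)%:R.
  rewrite !ltnS; case: (ltngtP d x) => h /=; lra.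
lra.
Qed.

Lemma pairA (R : realType) (x n : nat) :
  \sum_(0 <= j < n.*2) (if odd j then ((j < x)%N%:R + 1/2 * (x == j)%:R) else 0)
  <= 1/2 * \sum_(0 <= i < n.*2) ((i < x)%N)%:R :> R.
Proof.
elim: n => [|n IH]; first by rewrite !big_geq // mulr0.
rewrite doubleS !big_nat_recr //= odd_double /=.
set d := n.*2 in IH *.
have key : ((d.+1 < x)%N%:R + 1/2 * (x == d.+1)%:R : R) <=
   1/2 * ((d < x)%N)%:R + 1/2 * ((d.+1 < x)%N)%:R.
  case: (ltngtP d.+1 x) => h /=; lra.
lra.
Qed.

Lemma perkB (R : realType) N (alpha c : R) (M x : nat) (mg : 'I_N.+1 -> R) :
  0 <= c -> 0 <= alpha <= 1 ->
  (forall j : 'I_N.+1, mg j = if ~~ odd j && ((j : nat) <= M)%N then c else 0) ->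
  \sum_j mg j * ((((j : nat) < x)%N)%:R + alpha / 2 * ((x == j))%:R)
    <= c * (x.+1%:R / 2).
Proof.
move=> c0 ha hm.
apply: (@le_trans _ _ (\sum_(j < N.+1) c * (if ~~ odd j then
   ((((j : nat) < x)%N)%:R + 1 / 2 * ((x == j))%:R) else 0))).
  apply: ler_sum => j _; rewrite hm; case: (odd j) => /=; first by rewrite !mul0r mulr0.
  have h1 : 0 <= (((j : nat) < x)%N)%:R :> R by [].
  have h2 : 0 <= ((x == j))%:R :> R by [].
  case: ((j : nat) <= M)%N => /=.
    apply: ler_wpM2l => //; apply: lerD => //; apply: ler_wpM2r => //; lra.
  rewrite mul0r; apply: mulr_ge0 => //; lra.
rewrite -mulr_sumr; apply: ler_wpM2l => //.
rewrite -(big_mkord (fun _ => true) (fun j => if ~~ odd j then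
   (((j < x)%N)%:R + 1 / 2 * ((x == j))%:R) else 0 : R)).
apply: le_trans (widen2 _ _) _.
  move=> j; case: ifP => // _.
  have h1 : 0 <= (((j : nat) < x)%N)%:R :> R by [].
  have h2 : 0 <= ((x == j))%:R :> R by [].
  lra.
apply: le_trans (@pairB R x N.+1) _.
rewrite -natr_sum sum_lt.
have : ((minn (N.+1).*2 x.+1)%:R <= x.+1%:R :> R) by rewrite ler_nat geq_minr.
lra.
Qed.

Lemma perkA (R : realType) N (alpha c : R) (M x : nat) (mg : 'I_N.+1 -> R) :
  0 <= c -> 0 <= alpha <= 1 ->
  (forall j : 'I_N.+1, mg j = if odd j && ((j : nat) < M)%N then c else 0) ->
  \sum_j mg j * ((((j : nat) < x)%N)%:R + alpha / 2 * ((x == j))%:R)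
    <= c * (x%:R / 2).
Proof.
move=> c0 ha hm.
apply: (@le_trans _ _ (\sum_(j < N.+1) c * (if odd j then
   ((((j : nat) < x)%N)%:R + 1 / 2 * ((x == j))%:R) else 0))).
  apply: ler_sum => j _; rewrite hm; case: (odd j) => /=; last by rewrite !mul0r mulr0.
  have h1 : 0 <= (((j : nat) < x)%N)%:R :> R by [].
  have h2 : 0 <= ((x == j))%:R :> R by [].
  case: ((j : nat) < M)%N => /=.
    apply: ler_wpM2l => //; apply: lerD => //; apply: ler_wpM2r => //; lra.
  rewrite mul0r; apply: mulr_ge0 => //; lra.
rewrite -mulr_sumr; apply: ler_wpM2l => //.
rewrite -(big_mkord (fun _ => true) (fun j => if odd j then
   (((j < x)%N)%:R + 1 / 2 * ((x == j))%:R) else 0 : R)).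
apply: le_trans (widen2 _ _) _.
  move=> j; case: ifP => // _.
  have h1 : 0 <= (((j : nat) < x)%N)%:R :> R by [].
  have h2 : 0 <= ((x == j))%:R :> R by [].
  lra.
apply: le_trans (@pairA R x N.+1) _.
rewrite -natr_sum sum_lt.
have : ((minn (N.+1).*2 x)%:R <= x%:R :> R) by rewrite ler_nat geq_minr.
lra.
Qed.

Lemma pay_sym (R : realType) N K (alpha : R) (s t : alloc N K) :
  payoff alpha s t + payoff alpha t s =
  K%:R - (1 - alpha) * \sum_(k < K) (((s k : nat) == t k))%:R.
Proof.
rewrite /payoff -big_split /=.
have -> : K%:R = \sum_(k < K) (1 : R) by rewrite sumr_const card_ord.
rewrite mulr_sumr -sumrB; apply: eq_bigr => k _.
case: (ltngtP (t k : nat) (s k)) => h /=; lra.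
Qed.

Theorem mainTheorem12 (R : realType) (N K : nat) (alpha : R)
  (sA sB : {ffun alloc N K -> R}) :
  (1 <= N)%N -> (2 <= K)%N -> (K %| N)%N ->
  0 <= alpha <= 1 ->
  mixed sA -> mixed sB ->
  (forall (k : 'I_K) (j : 'I_N.+1),
      marginal sA k j =
      (if odd j && ((j : nat) < 2 * (N %/ K))%N then ((N %/ K)%:R)^-1 else 0)) ->
  (forall (k : 'I_K) (j : 'I_N.+1),
      marginal sB k j =
      (if ~~ odd j && ((j : nat) <= 2 * (N %/ K))%N then ((N %/ K).+1%:R)^-1 else 0)) ->
  nash alpha sA sB /\
  exp_payoff alpha sA sB = K%:R / 2 /\
  exp_payoff alpha sB sA = K%:R / 2.
Proof.
move=> hN hK hdiv ha hA hB mA mB.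
set m := (N %/ K)%N in mA mB.
have HN : N = (m * K)%N by rewrite /m divnK.
have m0 : (0 < m)%N.
  rewrite lt0n; apply/eqP => e; move: hN; by rewrite HN e.
have HNr : (N%:R : R) = m%:R * K%:R by rewrite {1}HN natrM.
have m0r : (m%:R : R) != 0 by rewrite pnatr_eq0 -lt0n.
have m1r : (m.+1%:R : R) != 0 by rewrite pnatr_eq0.
have hm1 : m.+1%:R = m%:R + 1 :> R by rewrite mulrSr.
have bB : forall tau, mixed tau -> exp_payoff alpha tau sB <= K%:R / 2.
  move=> tau ht; apply: exp_le ht _ => s hs.
  rewrite pure_vs.
  apply: (@le_trans _ _ (\sum_(k<K) (m.+1%:R)^-1 * ((s k : nat).+1%:R / 2))).
    apply: ler_sum => k _; apply: (@perkB R N alpha _ (2 * m)%N) => //.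
    by rewrite invr_ge0 ler0n.
  rewrite -mulr_sumr -mulr_suml -natr_sum sumS (eqP hs) natrD HNr.
  rewrite hm1 in m1r *; rewrite le_eqVlt; apply/orP; left; apply/eqP; by field.
have bA : forall tau, mixed tau -> exp_payoff alpha tau sA <= K%:R / 2.
  move=> tau ht; apply: exp_le ht _ => s hs.
  rewrite pure_vs.
  apply: (@le_trans _ _ (\sum_(k<K) (m%:R)^-1 * ((s k : nat)%:R / 2))).
    apply: ler_sum => k _; apply: (@perkA R N alpha _ (2 * m)%N) => //.
    by rewrite invr_ge0 ler0n.
  rewrite -mulr_sumr -mulr_suml -natr_sum (eqP hs) HNr.
  rewrite le_eqVlt; apply/orP; left; apply/eqP; by field.
have hsum : exp_payoff alpha sA sB + exp_payoff alpha sB sA = K%:R.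
  case: hA => A0 A1 A2; case: hB => B0 B1 B2.
  rewrite /exp_payoff [X in _ + X]exchange_big -big_split /=.
  pose T (s t : alloc N K) := \sum_(k < K) (((s k : nat) == t k))%:R : R.
  transitivity (\sum_s \sum_t (K%:R * (sA s * sB t) -
       (1 - alpha) * (sA s * (sB t * T s t)))).
    apply: eq_bigr => s _; rewrite -big_split /=; apply: eq_bigr => t _.
    have hp := pay_sym alpha s t.
    have -> : payoff alpha t s = K%:R - (1 - alpha) * T s t - payoff alpha s t.
      by rewrite -hp /T; ring.
    ring.
  under eq_bigr do rewrite sumrB.
  rewrite sumrB.
  have E1 : \sum_s \sum_t K%:R * (sA s * sB t) = K%:R :> R.
    transitivity (\sum_s K%:R * (sA s * \sum_t sB t)).
      by apply: eq_bigr => s _; rewrite !mulr_sumr.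
    by rewrite B1 -mulr_sumr; under eq_bigr do rewrite mulr1; rewrite A1 mulr1.
  have E2 : \sum_s \sum_t (1 - alpha) * (sA s * (sB t * T s t)) = 0 :> R.
    transitivity ((1 - alpha) * \sum_s sA s * \sum_t sB t * T s t).
      by rewrite mulr_sumr; apply: eq_bigr => s _; rewrite !mulr_sumr.
    under eq_bigr => s _ do rewrite /T (marg_sum sB (fun k (j : 'I_N.+1) =>
          (((s k : nat) == j))%:R)).
    rewrite (marg_sum sA (fun k (i : 'I_N.+1) =>
          \sum_j marginal sB k j * (((i : nat) == j))%:R)).
    rewrite big1 ?mulr0 // => k _; rewrite big1 // => i _.
    rewrite mulr_sumr big1 // => j _.
    rewrite mA mB; case: (eqVneq (i : nat) j) => [e|ne].
      by rewrite e; case: (odd j) => /=; rewrite ?mul0r ?mulr0.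
    by rewrite mulr0 mulr0.
  by rewrite E1 E2 subr0.
have e1 := bB sA hA.
have e2 := bA sB hB.
have eAB : exp_payoff alpha sA sB = K%:R / 2 by lra.
have eBA : exp_payoff alpha sB sA = K%:R / 2 by lra.
split; last by split.
split => // tau ht; [rewrite eAB; exact: bB | rewrite eBA; exact: bA].
Qed.
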